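(* Let $T_C$ be a finite complete binary tree whose root has two children, and let $T_C'$ and $T_C''$ be the subtrees of $T_C$ rooted at the left and right child of the root, respectively. Then $$\mathcal{S}(T_C) = \mathcal{S}(T_C') \cup \mathcal{S}(T_C'') \cup \big(B_r(T_C') \times B_l(T_C'')\big).$$
   Context: All trees are rooted, and children are designated left or right. A complete binary tree is a rooted tree in which every non-leaf vertex has exactly two children. A full binary tree is a rooted tree in which every vertex has 0 or 2 children. An internal tree of a complete binary tree $T_C$ is a full binary tree $T$ with $\mathrm{root}(T)=\mathrm{root}(T_C)$ whose vertices and edges are a subset of those of $T_C$ (left/right children as in $T_C$); $\mathcal{T}(T_C)$ is the set of all internal trees of $T_C$. For a tree $T$, $L(T)=(L_1(T),\dots,L_{|L(T)|}(T))$ is the sequence of its leaves from left-most to right-most. The set of successive leaf transitions of $T_C$ is $$\mathcal{S}(T_C) = \bigcup_{T\in\mathcal{T}(T_C)} \{(L_n(T), L_{n+1}(T)) : 1 \le n < |L(T)|\}.$$ The left boundary $B_l(T_C)$ is the set $\{\mathrm{left}^k(\mathrm{root}(T_C)) : k\ge 0\}$ of vertices reached from the root by repeatedly taking left children (including the root); the right boundary $B_r(T_C)$ is defined symmetrically with right children. *)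

(* Defs.v *)
From mathcomp Require Import all_boot.
Set Implicit Arguments. Unset Strict Implicit. Unset Printing Implicit Defensive.

(* Vertices of a tree are addressed by their path from the root:
   a [seq bool], where [false] = go to the left child, [true] = go to the
   right child.  The root is [::]. *)
Inductive btree : Type := BLeaf | BNode of btree & btree.

Fixpoint vertex (t : btree) (p : seq bool) : bool :=
  match p, t with
  | [::], _ => true
  | b :: p', BNode l r => vertex (if b then r else l) p'
  | _ :: _, BLeaf => false
  end.

(* [internal T TC] : T (a full binary tree) is an internal tree of TC: same
   root, vertices/edges a subset of those of TC with the same left/right
   children.  Since T is full, every vertex of T is either a leaf of T or has
   both of its TC-children in T. *)
Fixpoint internal (T TC : btree) : bool :=
  match T, TC with
  | BLeaf, _ => true
  | BNode l r, BNode l' r' => internal l l' && internal r r'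
  | BNode _ _, BLeaf => false
  end.

Fixpoint leaves (t : btree) : seq (seq bool) :=
  match t with
  | BLeaf => [:: [::]]
  | BNode l r => map (cons false) (leaves l) ++ map (cons true) (leaves r)
  end.

Definition succ_trans (TC : btree) (x y : seq bool) : Prop :=
  exists T, internal T TC /\
    exists n, n.+1 < size (leaves T) /\
      x = nth [::] (leaves T) n /\ y = nth [::] (leaves T) n.+1.

Definition left_boundary (TC : btree) (v : seq bool) : Prop :=
  exists k, vertex TC (nseq k false) /\ v = nseq k false.
Definition right_boundary (TC : btree) (v : seq bool) : Prop :=
  exists k, vertex TC (nseq k true) /\ v = nseq k true.

(* Main.v *)
Require Import Defs.
From mathcomp Require Import all_boot.
From mathcomp Require Import zify.

Fixpoint spineR (k : nat) : btree :=
  if k is k'.+1 then BNode BLeaf (spineR k') else BLeaf.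
Fixpoint spineL (k : nat) : btree :=
  if k is k'.+1 then BNode (spineL k') BLeaf else BLeaf.

Lemma spineR_int k : forall t, vertex t (nseq k true) -> internal (spineR k) t.
Proof. elim: k => [|k IH] [|a b] //= H; exact: IH. Qed.
Lemma spineL_int k : forall t, vertex t (nseq k false) -> internal (spineL k) t.
Proof. elim: k => [|k IH] [|a b] //= H; rewrite ?andbT; exact: IH. Qed.

Lemma spineR_leaves k : exists s, leaves (spineR k) = rcons s (nseq k true).
Proof.
elim: k => [|k [s IH]] /=; first by exists [::].
exists ([:: [:: false]] ++ map (cons true) s); by rewrite IH map_rcons.
Qed.
Lemma spineL_leaves k : exists s, leaves (spineL k) = nseq k false :: s.
Proof.
elim: k => [|k [s IH]] /=; first by exists [::].
by exists (map (cons false) s ++ [:: [:: true]]); rewrite IH.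
Qed.

Lemma last_leaf T : exists s k, leaves T = rcons s (nseq k true) /\
  forall TC, internal T TC -> vertex TC (nseq k true).
Proof.
elim: T => [|a _ b [s [k [E H]]]] /=; first by exists [::], 0; split=> // -[].
exists (map (cons false) (leaves a) ++ map (cons true) s), k.+1; split.
  by rewrite E map_rcons rcons_cat.
by case=> [|a' b'] //= /andP [_ /H].
Qed.
Lemma first_leaf T : exists s k, leaves T = nseq k false :: s /\
  forall TC, internal T TC -> vertex TC (nseq k false).
Proof.
elim: T => [|a [s [k [E H]]] b _] /=; first by exists [::], 0; split=> // -[].
exists (map (cons false) s ++ map (cons true) (leaves b)), k.+1; split.
  by rewrite E.
by case=> [|a' b'] //= /andP [/H].
Qed.

Lemma leaves_size T : 0 < size (leaves T).
Proof. by case: (first_leaf T) => s [k [-> _]]. Qed.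

Theorem mainTheorem5 (l r : btree) (x y : seq bool) :
  succ_trans (BNode l r) x y <->
  (exists x' y', succ_trans l x' y' /\ x = false :: x' /\ y = false :: y') \/
  (exists x' y', succ_trans r x' y' /\ x = true :: x' /\ y = true :: y') \/
  (exists x' y', right_boundary l x' /\ left_boundary r y' /\
                 x = false :: x' /\ y = true :: y').
Proof.
split.
- case=> [[|Tl Tr]] [Hi [n [Hn [-> ->]]]] //=.
  move: Hi => /= /andP [Hl Hr].
  move: Hn; rewrite /= size_cat !size_map => Hn.
  rewrite !nth_cat !size_map.
  have [lt1|ge1] := ltnP n.+1 (size (leaves Tl)).
    have lt0 := ltnW lt1; rewrite lt0 !(nth_map [::]) //.
    left; do 2 eexists; split; last by split.
    exists Tl; split => //; exists n; split => //.
  have [lt0|ge0] := ltnP n (size (leaves Tl)).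
    have Em : n.+1 = size (leaves Tl) by apply/eqP; rewrite eqn_leq lt0 ge1.
    rewrite -Em subnn !(nth_map [::]) //; last exact: leaves_size.
    right; right.
    case: (last_leaf Tl) => s [k [E H]].
    case: (first_leaf Tr) => s' [j [E' H']].
    exists (nseq k true), (nseq j false); split; last split; last split.
    + by exists k; split => //; apply: H.
    + by exists j; split => //; apply: H'.
    + move: Em; rewrite E size_rcons => -[->]; by rewrite nth_rcons ltnn eqxx.
    + by rewrite E'.
  rewrite !(nth_map [::]); last 2 first.
  + rewrite ?size_map; lia.
  + rewrite ?size_map; lia.
  right; left; do 2 eexists; split; last by split.
  exists Tr; split => //; exists (n - size (leaves Tl)); split.
    lia.
  by rewrite -subSn.
- case=> [[x' [y' [[T [Hi [n [Hn [E1 E2]]]]] [-> ->]]]]|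
         [[x' [y' [[T [Hi [n [Hn [E1 E2]]]]] [-> ->]]]]|
          [x' [y' [[k [Hk ->]] [[j [Hj ->]] [-> ->]]]]]]].
  + exists (BNode T BLeaf); split; first by rewrite /= Hi.
    exists n; rewrite /= size_cat size_map !nth_cat size_map Hn (ltnW Hn).
    rewrite !(nth_map [::]) ?E1 ?E2 //; last exact: ltnW.
    by split => //; rewrite addn1 ltnS ltnW.
  + exists (BNode BLeaf T); split; first by rewrite /= Hi.
    exists n.+1; rewrite /= size_map.
    by rewrite !(nth_map [::]) ?E1 ?E2 //; last exact: ltnW.
  + exists (BNode (spineR k) (spineL j)); split.
      by rewrite /= spineR_int // spineL_int.
    case: (spineR_leaves k) => s E; case: (spineL_leaves j) => s' E'.
    exists (size s); rewrite /= E E' size_cat !size_map size_rcons /=.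
    split; first by rewrite addnS ltnS ltnS leq_addr.
    rewrite !nth_cat !size_map size_rcons ltnSn ltnn subnn /=.
    by rewrite (nth_map [::]) ?size_rcons // nth_rcons ltnn eqxx.
Qed.
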